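(* Let $(E,\rho)$ be a complete partial $b_v(s)$ metric space and let $S:E\to E$ satisfy $\rho(Su,Sw)\le\lambda\max\{\rho(u,w),\rho(u,Su),\rho(w,Sw)\}$ for all $u,w\in E$, where $\lambda\in[0,\tfrac1s)$. Then $S$ has a unique fixed point $b\in E$, and $\rho(b,b)=0$.
   Context: Let $E$ be a nonempty set and $v\in\mathbb{N}$. $(E,\rho)$, with $\rho:E\times E\to[0,\infty)$, is a partial $b_v(s)$ metric space if there is a real $s\ge1$ such that for all $u,w,z_1,\dots,z_v\in E$: (1) $u=w$ iff $\rho(u,u)=\rho(u,w)=\rho(w,w)$; (2) $\rho(u,u)\le\rho(u,w)$; (3) $\rho(u,w)=\rho(w,u)$; (4) $\rho(u,w)\le s[\rho(u,z_1)+\rho(z_1,z_2)+\dots+\rho(z_{v-1},z_v)+\rho(z_v,w)]-\sum_{i=1}^v\rho(z_i,z_i)$. A sequence $\{u_n\}$ in $E$ converges to $u\in E$ if $\lim_{n\to\infty}\rho(u_n,u)=\rho(u,u)$; it is Cauchy if $\lim_{n,m\to\infty}\rho(u_n,u_m)$ exists and is finite. $(E,\rho)$ is complete if for every Cauchy sequence $\{u_n\}$ there is $u\in E$ with $\lim_{n,m\to\infty}\rho(u_n,u_m)=\lim_{n\to\infty}\rho(u_n,u)=\rho(u,u)$. *)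

(* Defs.v *)
From Stdlib Require Import Reals Lra.
Open Scope R_scope.

(* Chain sum  rho(u,z 1) + rho(z 1,z 2) + ... + rho(z (v-1), z v) + rho(z v, w)
   for the points z 1, ..., z v (z 0 is unused). *)
Fixpoint inner_sum {E : Type} (rho : E -> E -> R) (z : nat -> E) (k : nat) : R :=
  match k with
  | O => 0
  | S k' => inner_sum rho z k' + rho (z k) (z (S k))
  end.

Definition chain_sum {E : Type} (rho : E -> E -> R) (v : nat) (u w : E)
  (z : nat -> E) : R :=
  rho u (z 1%nat) + inner_sum rho z (v - 1)%nat + rho (z v) w.

Definition self_sum {E : Type} (rho : E -> E -> R) (v : nat) (z : nat -> E) : R :=
  sum_f_R0 (fun i => rho (z (S i)) (z (S i))) (v - 1)%nat.

Definition partial_bv_metric {E : Type} (v : nat) (s : R) (rho : E -> E -> R) : Prop :=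
  (1 <= v)%nat /\ 1 <= s /\
  (forall u w, 0 <= rho u w) /\
  (forall u w, u = w <-> (rho u u = rho u w /\ rho u w = rho w w)) /\
  (forall u w, rho u u <= rho u w) /\
  (forall u w, rho u w = rho w u) /\
  (forall u w (z : nat -> E),
      rho u w <= s * chain_sum rho v u w z - self_sum rho v z).

Definition pconverges {E : Type} (rho : E -> E -> R) (un : nat -> E) (x : E) : Prop :=
  Un_cv (fun n => rho (un n) x) (rho x x).

Definition double_lim {E : Type} (rho : E -> E -> R) (un : nat -> E) (L : R) : Prop :=
  forall eps, eps > 0 -> exists N : nat, forall n m : nat,
    (n >= N)%nat -> (m >= N)%nat -> Rabs (rho (un n) (un m) - L) < eps.

Definition pCauchy {E : Type} (rho : E -> E -> R) (un : nat -> E) : Prop :=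
  exists L : R, double_lim rho un L.

Definition pcomplete {E : Type} (rho : E -> E -> R) : Prop :=
  forall un : nat -> E, pCauchy rho un ->
    exists x : E, double_lim rho un (rho x x) /\ pconverges rho un x.

(* Main.v *)
Require Import Defs.
From Stdlib Require Import Reals.
From Stdlib Require Import Lra Lia.
Open Scope R_scope.

Lemma inner_const {E : Type} (rho : E -> E -> R) (y : E) (k : nat) :
  inner_sum rho (fun _ => y) k = INR k * rho y y.
Proof.
  induction k as [|k IH]; cbn [inner_sum]; [simpl; ring|].
  rewrite IH, S_INR; ring.
Qed.

Lemma final_zero (t s V lambda : R) :
  0 <= t -> 1 <= s -> 0 <= V -> 0 <= lambda -> s * lambda < 1 ->
  (forall e, e > 0 -> t <= s * (e + V * e + lambda * Rmax e t)) -> t = 0.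
Proof.
  intros Ht Hs HV Hl Hsl H.
  destruct (Req_dec t 0) as [|Hne]; auto. exfalso.
  assert (Htp : t > 0) by lra.
  set (C := s * (1 + V)).
  assert (HC : C >= 1) by (unfold C; nra).
  set (e := t * (1 - s * lambda) / (2 * C)).
  assert (HeC : e * C = t * (1 - s * lambda) / 2) by (unfold e; field; lra).
  assert (Hpos : 0 < t * (1 - s * lambda)) by (apply Rmult_lt_0_compat; lra).
  assert (He : e > 0).
  { unfold e. apply Rdiv_lt_0_compat; lra. }
  assert (Het : e <= t).
  { assert (0 <= t * (s * lambda)) by (apply Rmult_le_pos; nra).
    assert (e <= e * C) by nra. nra. }
  specialize (H e He). rewrite Rmax_right in H by lra.
  assert (t <= C * e + s * lambda * t) by (unfold C; nra).
  nra.
Qed.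

Theorem mainTheorem4 (E : Type) (v : nat) (s : R) (rho : E -> E -> R)
  (S : E -> E) (lambda : R) :
  inhabited E ->
  partial_bv_metric v s rho ->
  pcomplete rho ->
  0 <= lambda -> lambda < 1 / s ->
  (forall u w, rho (S u) (S w) <= lambda * Rmax (rho u w) (Rmax (rho u (S u)) (rho w (S w)))) ->
  exists b : E, S b = b /\ rho b b = 0 /\ (forall c : E, S c = c -> c = b).
Proof.
  intros [x0] [Hv [Hs [Hpos [Heq [Hself [Hsym Htri]]]]]] Hcomp Hl Hls Hcon.
  assert (Hsl : s * lambda < 1).
  { assert (s * lambda < s * (1 / s)) by (apply Rmult_lt_compat_l; lra).
    replace (s * (1 / s)) with 1 in H by (field; lra). exact H. }
  assert (Hl1 : lambda < 1) by nra.
  set (V := INR (v - 1)).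
  assert (HV : 0 <= V) by apply pos_INR.
  assert (Htri2 : forall u y w, rho u w <= s * (rho u y + V * rho y y + rho y w)).
  { intros u y w. pose proof (Htri u w (fun _ => y)) as H.
    unfold chain_sum in H. rewrite inner_const in H.
    assert (0 <= self_sum rho v (fun _ => y)).
    { unfold self_sum. apply cond_pos_sum. intros; apply Hpos. }
    fold V in H. lra. }
  set (x := fun n => Nat.iter n S x0).
  assert (HxS : forall n, x (Datatypes.S n) = S (x n)) by reflexivity.
  set (d := fun n => rho (x n) (x (Datatypes.S n))).
  assert (Hd0 : forall n, 0 <= d n) by (intro; apply Hpos).
  assert (Hdstep : forall n, d (Datatypes.S n) <= lambda * d n).
  { intro n.
    assert (H : d (Datatypes.S n) <= lambda * Rmax (d n) (Rmax (d n) (d (Datatypes.S n)))).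
    { exact (Hcon (x n) (S (x n))). }
    pose proof (Hd0 n). pose proof (Hd0 (Datatypes.S n)).
    assert (0 <= lambda * d n) by (apply Rmult_le_pos; lra).
    assert (0 <= (1 - lambda) * d (Datatypes.S n)) by (apply Rmult_le_pos; lra).
    unfold Rmax in H. repeat destruct Rle_dec; nra. }
  assert (Hdpow : forall n, d n <= lambda ^ n * d 0%nat).
  { induction n as [|n IH]; simpl; [lra|].
    pose proof (Hdstep n). nra. }
  assert (Hselfd : forall n, rho (x (Datatypes.S n)) (x (Datatypes.S n)) <= d n).
  { intro n. unfold d. rewrite (Hsym (x n)). apply Hself. }
  assert (Hselfd' : forall n, rho (x n) (x n) <= d n).
  { intro n. apply Hself. }
  set (K := s * (1 + V) * d 0%nat / (1 - s * lambda)).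
  assert (HK : K * (1 - s * lambda) = s * (1 + V) * d 0%nat) by (unfold K; field; lra).
  assert (HK0 : 0 <= K).
  { unfold K, Rdiv. apply Rmult_le_pos.
    - pose proof (Hd0 0%nat). apply Rmult_le_pos; [apply Rmult_le_pos|]; lra.
    - left. apply Rinv_0_lt_compat. lra. }
  assert (HdK : d 0%nat <= K).
  { pose proof (Hd0 0%nat).
    assert (0 <= K * (s * lambda)) by (apply Rmult_le_pos; nra).
    assert (d 0%nat <= s * (1 + V) * d 0%nat).
    { rewrite <- (Rmult_1_l (d 0%nat)) at 1. apply Rmult_le_compat_r; nra. }
    lra. }
  assert (Hbound : forall k n, rho (x n) (x (n + k)%nat) <= K * lambda ^ n).
  { induction k as [|k IH]; intro n.
    - rewrite Nat.add_0_r. pose proof (Hselfd' n). pose proof (Hdpow n).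
      pose proof (pow_le lambda n Hl). nra.
    - replace (n + Datatypes.S k)%nat with (Datatypes.S n + k)%nat by lia.
      pose proof (Htri2 (x n) (x (Datatypes.S n)) (x (Datatypes.S n + k)%nat)) as H.
      fold (d n) in H.
      pose proof (IH (Datatypes.S n)) as H2. simpl pow in H2.
      pose proof (Hselfd n) as H3. pose proof (Hdpow n) as H4.
      pose proof (pow_le lambda n Hl) as H5.
      set (P := lambda ^ n) in *.
      set (r := rho (x (Datatypes.S n)) (x (Datatypes.S n))) in *.
      set (r' := rho (x (Datatypes.S n)) (x (Datatypes.S n + k)%nat)) in *.
      assert (A1 : s * d n <= s * (P * d 0%nat)) by (apply Rmult_le_compat_l; lra).
      assert (A2 : s * V * r <= s * V * (P * d 0%nat)).
      { apply Rmult_le_compat_l; [nra|]. lra. }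
      assert (A3 : s * r' <= s * (K * (lambda * P))) by (apply Rmult_le_compat_l; lra).
      assert (A4 : K * (1 - s * lambda) * P = s * (1 + V) * d 0%nat * P) by (rewrite HK; ring).
      nra. }
  assert (Hsmall : forall eps, eps > 0 -> exists N, forall n, (n >= N)%nat -> K * lambda ^ n < eps).
  { intros eps He.
    destruct (pow_lt_1_zero lambda ltac:(rewrite Rabs_right; lra) (eps / (K + 1)))
      as [N HN].
    { apply Rdiv_lt_0_compat; lra. }
    exists N. intros n Hn. specialize (HN n Hn).
    rewrite Rabs_right in HN by (apply Rle_ge, pow_le; lra).
    assert ((K + 1) * lambda ^ n < (K + 1) * (eps / (K + 1))) by (apply Rmult_lt_compat_l; lra).
    replace ((K + 1) * (eps / (K + 1))) with eps in H by (field; lra).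
    pose proof (pow_le lambda n Hl). nra. }
  assert (Hcauchy : double_lim rho x 0).
  { intros eps He. destruct (Hsmall eps He) as [N HN]. exists N.
    intros n m Hn Hm. rewrite Rminus_0_r. rewrite Rabs_right by (apply Rle_ge, Hpos).
    destruct (Nat.le_ge_cases n m) as [Hnm|Hmn].
    - replace m with (n + (m - n))%nat by lia.
      pose proof (Hbound (m - n)%nat n). pose proof (HN n Hn). lra.
    - rewrite Hsym. replace n with (m + (n - m))%nat by lia.
      pose proof (Hbound (n - m)%nat m). pose proof (HN m Hm). lra. }
  destruct (Hcomp x (ex_intro _ 0 Hcauchy)) as [b [Hdl Hconv]].
  assert (Hbb : rho b b = 0).
  { destruct (Req_dec (rho b b) 0) as [|Hne]; auto. exfalso.
    set (e := Rabs (rho b b) / 2).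
    assert (He : e > 0) by (unfold e; pose proof (Rabs_pos_lt _ Hne); lra).
    destruct (Hdl e He) as [N1 H1]. destruct (Hcauchy e He) as [N2 H2].
    specialize (H1 (max N1 N2) (max N1 N2) ltac:(lia) ltac:(lia)).
    specialize (H2 (max N1 N2) (max N1 N2) ltac:(lia) ltac:(lia)).
    rewrite Rminus_0_r in H2.
    set (a := rho (x (max N1 N2)) (x (max N1 N2))) in *.
    unfold e in *. revert H1 H2. unfold Rabs. repeat destruct Rcase_abs; lra. }
  unfold pconverges in Hconv. rewrite Hbb in Hconv.
  set (t := rho b (S b)).
  assert (Ht0 : t = 0).
  { apply (final_zero t s V lambda); try lra; [apply Hpos|].
    intros e He.
    destruct (Hconv e He) as [N1 H1]. destruct (Hsmall e He) as [N2 H2].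
    set (n := max N1 N2).
    pose proof (H1 n ltac:(unfold n; lia)) as Ha.
    pose proof (H1 (Datatypes.S n) ltac:(unfold n; lia)) as Hb.
    unfold R_dist in Ha, Hb. cbv beta in Ha, Hb. rewrite Rminus_0_r in Ha, Hb.
    rewrite Rabs_right in Ha, Hb by (apply Rle_ge, Hpos).
    pose proof (H2 n ltac:(unfold n; lia)) as Hc.
    assert (Hdn : d n < e).
    { pose proof (Hdpow n). pose proof (Hd0 0%nat). pose proof (pow_le lambda n Hl). nra. }
    pose proof (Htri2 b (x (Datatypes.S n)) (S b)) as T.
    rewrite (Hsym b (x (Datatypes.S n))) in T.
    assert (Hc2 : rho (x (Datatypes.S n)) (S b) <= lambda * Rmax (rho (x n) b) (Rmax (d n) (rho b (S b))))
      by exact (Hcon (x n) b).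
    assert (Hm : Rmax (rho (x n) b) (Rmax (d n) (rho b (S b))) <= Rmax e t).
    { fold t. unfold Rmax. repeat destruct Rle_dec; lra. }
    pose proof (Hselfd n).
    assert (lambda * Rmax (rho (x n) b) (Rmax (d n) (rho b (S b))) <= lambda * Rmax e t)
      by (apply Rmult_le_compat_l; lra).
    assert (rho (x (Datatypes.S n)) b + V * rho (x (Datatypes.S n)) (x (Datatypes.S n))
            + rho (x (Datatypes.S n)) (S b) <= e + V * e + lambda * Rmax e t).
    { assert (V * rho (x (Datatypes.S n)) (x (Datatypes.S n)) <= V * e)
        by (apply Rmult_le_compat_l; lra). lra. }
    assert (s * (rho (x (Datatypes.S n)) b + V * rho (x (Datatypes.S n)) (x (Datatypes.S n))
            + rho (x (Datatypes.S n)) (S b)) <= s * (e + V * e + lambda * Rmax e t))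
      by (apply Rmult_le_compat_l; lra).
    fold t in T. lra. }
  assert (HSb : S b = b).
  { symmetry. apply Heq. fold t. rewrite Hbb, Ht0.
    assert (Hq : rho (S b) (S b) <= rho b (S b)).
    { rewrite (Hsym b (S b)). apply Hself. }
    fold t in Hq. pose proof (Hpos (S b) (S b)). lra. }
  exists b. split; [exact HSb|]. split; [exact Hbb|].
  intros c Hc. apply Heq.
  pose proof (Hcon c b) as H. rewrite Hc, HSb in H.
  pose proof (Hself c b). assert (rho b b <= rho c b) by (rewrite (Hsym c b); apply Hself).
  pose proof (Hpos c c). pose proof (Hpos b b).
  assert (Hm : Rmax (rho c b) (Rmax (rho c c) (rho b b)) = rho c b).
  { unfold Rmax. repeat destruct Rle_dec; lra. }
  rewrite Hm in H.
  assert (rho c b = 0).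
  { pose proof (Hpos c b). assert (0 <= (1 - lambda) * rho c b) by (apply Rmult_le_pos; lra). nra. }
  lra.
Qed.
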